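(* Let a group $G$ act geometrically on a systolic complex $X$ and let $h\in G$ be a hyperbolic isometry. Then for every integer $K\ge L(h)$ the centraliser $C_G(h)$ leaves $\mathrm{Disp}_K(h)$ invariant and acts geometrically (properly and cocompactly) on the subcomplex $\mathrm{Disp}_K(h)\subset X$.
   Context: $X$ is a systolic complex (simply connected simplicial complex with flag, $6$-large vertex links, where $6$-large means every embedded cycle of length $4$ or $5$ has a diagonal), with the combinatorial metric $d$ on vertices. A geometric action is by simplicial automorphisms, with finite vertex stabilisers, and cocompact. An isometry $h$ is hyperbolic if it fixes no simplex of $X$. $L(h)=\min_x d(x,hx)$ over vertices $x$. For $K\ge L(h)$, $\mathrm{Disp}_K(h)$ is the subcomplex spanned by all vertices $x$ with $d(x,hx)\le K$. *)

(* Defs.v *)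
(* A systolic complex is flag, hence determined by its
   1-skeleton: we represent X by a graph (adj) on a vertex type V; the
   simplices of X are the nonempty finite cliques. *)
From Stdlib Require Import List Arith Relations.
Import ListNotations.

Section Defs.
Context {V G : Type}.

Definition simple_graph (adj : V -> V -> Prop) : Prop :=
  (forall x y, adj x y -> adj y x) /\ (forall x, ~ adj x x).

(* simplices of the flag complex: nonempty lists of pairwise adjacent vertices
   (a simplex is the underlying vertex set of the list) *)
Definition is_simplex (adj : V -> V -> Prop) (s : list V) : Prop :=
  s <> [] /\ forall x y, In x s -> In y s -> x = y \/ adj x y.

Definition is_simplex_in (adj : V -> V -> Prop) (Y : V -> Prop) (s : list V) : Prop :=
  is_simplex adj s /\ forall x, In x s -> Y x.

Inductive walk (adj : V -> V -> Prop) : nat -> V -> V -> Prop :=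
| walk_nil x : walk adj 0 x x
| walk_cons n x y z : adj x y -> walk adj n y z -> walk adj (S n) x z.

Definition dist_le (adj : V -> V -> Prop) (x y : V) (K : nat) : Prop :=
  exists n, n <= K /\ walk adj n x y.

Definition is_dist (adj : V -> V -> Prop) (x y : V) (n : nat) : Prop :=
  walk adj n x y /\ forall m, walk adj m x y -> n <= m.

Definition connected (adj : V -> V -> Prop) : Prop :=
  forall x y, exists n, walk adj n x y.

Fixpoint is_edge_path (adj : V -> V -> Prop) (l : list V) : Prop :=
  match l with
  | x :: ((y :: _) as t) => adj x y /\ is_edge_path adj t
  | _ => True
  end.

Inductive elem_move (adj : V -> V -> Prop) : list V -> list V -> Prop :=
| move_backtrack l1 l2 a b :
    adj a b -> elem_move adj (l1 ++ [a; b; a] ++ l2) (l1 ++ [a] ++ l2)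
| move_triangle l1 l2 a b c :
    adj a b -> adj b c -> adj a c ->
    elem_move adj (l1 ++ [a; b; c] ++ l2) (l1 ++ [a; c] ++ l2).

Definition edge_homotopic (adj : V -> V -> Prop) : list V -> list V -> Prop :=
  clos_refl_sym_trans (list V) (elem_move adj).

Definition simply_connected (adj : V -> V -> Prop) : Prop :=
  connected adj /\
  forall (v : V) (t : list V), is_edge_path adj (v :: t) -> last (v :: t) v = v ->
    edge_homotopic adj (v :: t) [v].

(* every embedded cycle of length 4 or 5 in the link of every vertex
   (= full subcomplex on its neighbours) has a diagonal *)
Definition six_large_links (adj : V -> V -> Prop) : Prop :=
  forall (v : V) (n : nat) (w : nat -> V), (n = 4 \/ n = 5) ->
    (forall i, i < n -> adj v (w i)) ->
    (forall i j, i < n -> j < n -> w i = w j -> i = j) ->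
    (forall i, i < n -> adj (w i) (w (S i mod n))) ->
    exists i j, i < n /\ j < n /\ i <> j /\ j <> S i mod n /\ i <> S j mod n /\
      adj (w i) (w j).

Definition systolic (adj : V -> V -> Prop) : Prop :=
  simple_graph adj /\ simply_connected adj /\ six_large_links adj.

Definition is_group (mul : G -> G -> G) (one : G) (inv : G -> G) : Prop :=
  (forall a b c, mul a (mul b c) = mul (mul a b) c) /\
  (forall a, mul one a = a /\ mul a one = a) /\
  (forall a, mul (inv a) a = one /\ mul a (inv a) = one).

Definition is_simplicial_action (mul : G -> G -> G) (one : G)
    (adj : V -> V -> Prop) (act : G -> V -> V) : Prop :=
  (forall x, act one x = x) /\
  (forall g h x, act (mul g h) x = act g (act h x)) /\
  (forall g x y, adj x y <-> adj (act g x) (act g y)).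

Definition simplex_image (act : G -> V -> V) (g : G) (s t : list V) : Prop :=
  forall x, In x t <-> exists y, In y s /\ act g y = x.

Definition finite_pred (P : G -> Prop) : Prop :=
  exists l : list G, forall g, P g -> In g l.

(* the subgroup H acts geometrically on the full subcomplex spanned by Y:
   finite vertex stabilisers and cocompact (finitely many H-orbits of simplices) *)
Definition acts_geometrically (adj : V -> V -> Prop) (act : G -> V -> V)
    (H : G -> Prop) (Y : V -> Prop) : Prop :=
  (forall x, Y x -> finite_pred (fun g => H g /\ act g x = x)) /\
  (exists S : list (list V),
     (forall s, In s S -> is_simplex_in adj Y s) /\
     forall t, is_simplex_in adj Y t ->
       exists s g, In s S /\ H g /\ simplex_image act g s t).

Definition hyperbolic (adj : V -> V -> Prop) (act : G -> V -> V) (h : G) : Prop :=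
  ~ exists s, is_simplex adj s /\ simplex_image act h s s.

Definition translation_length (adj : V -> V -> Prop) (act : G -> V -> V)
    (h : G) (L : nat) : Prop :=
  (exists x, is_dist adj x (act h x) L) /\
  (forall x m, is_dist adj x (act h x) m -> L <= m).

Definition Disp (adj : V -> V -> Prop) (act : G -> V -> V) (K : nat) (h : G) (x : V) : Prop :=
  dist_le adj x (act h x) K.

Definition centralizer (mul : G -> G -> G) (h : G) (g : G) : Prop :=
  mul g h = mul h g.

End Defs.

(* Main.v *)
Require Import Defs.
From Stdlib Require Import List Arith Relations Classical Lia.
Import ListNotations.

Definition fin {T : Type} (P : T -> Prop) : Prop := exists l : list T, forall x, P x -> In x l.

Lemma fin_mono {T} (P Q : T -> Prop) : (forall x, P x -> Q x) -> fin Q -> fin P.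
Proof. intros H [l Hl]. exists l. auto. Qed.

Lemma fin_one {T} (a : T) : fin (fun x => x = a).
Proof. exists [a]. intros x ->. simpl; auto. Qed.

Lemma fin_list_union {A B} (l : list A) (R : A -> B -> Prop) :
  (forall a, In a l -> fin (R a)) -> fin (fun b => exists a, In a l /\ R a b).
Proof.
  induction l as [|a l IH]; intros H.
  - exists []. intros x [a [[] _]].
  - destruct (H a (or_introl eq_refl)) as [m Hm].
    destruct IH as [m' Hm']. { intros b Hb. apply H. right; auto. }
    exists (m ++ m'). intros x [a' [[<-|Ha'] Hr]]; apply in_or_app.
    + left; auto.
    + right; apply Hm'; eauto.
Qed.

Lemma fin_bind {A B} (P : A -> Prop) (Q : A -> B -> Prop) :
  fin P -> (forall a, P a -> fin (Q a)) -> fin (fun b => exists a, P a /\ Q a b).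
Proof.
  intros [l Hl] HQ.
  destruct (fin_list_union l (fun a b => P a /\ Q a b)) as [m Hm].
  - intros a _. destruct (classic (P a)) as [Pa|nPa].
    + destruct (HQ a Pa) as [m Hm]. exists m. intros x [_ Hx]; auto.
    + exists []. intros x [Pa _]; contradiction.
  - exists m. intros x [a [Pa Qa]]. apply Hm. exists a; auto.
Qed.

Lemma choose_list {A B} (l : list A) (P : A -> B -> Prop) :
  exists m : list B, forall a, In a l -> (exists b, P a b) -> exists b, In b m /\ P a b.
Proof.
  induction l as [|a l [m Hm]].
  - exists []. intros a [].
  - destruct (classic (exists b, P a b)) as [[b Hb]|nb].
    + exists (b :: m). intros a' [<-|Ha'] Hex.
      * exists b; simpl; auto.
      * destruct (Hm a' Ha' Hex) as [b' [? ?]]. exists b'; simpl; auto.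
    + exists m. intros a' [<-|Ha'] Hex; [contradiction|auto].
Qed.

Lemma fin_filter {A} (l : list A) (P : A -> Prop) :
  exists m, (forall a, In a m -> P a) /\ (forall a, In a l -> P a -> In a m).
Proof.
  induction l as [|a l [m [H1 H2]]].
  - exists []. split; intros a [].
  - destruct (classic (P a)).
    + exists (a :: m). split.
      * intros a' [<-|?]; auto.
      * intros a' [<-|?] ?; simpl; auto.
    + exists m. split; auto. intros a' [<-|?] ?; [contradiction|auto].
Qed.

Lemma ex_list_union {A B} (l : list A) (Q : A -> list B -> Prop) :
  (forall a, In a l -> exists m, Q a m) ->
  (forall a m m', incl m m' -> Q a m -> Q a m') ->
  exists M, forall a, In a l -> Q a M.
Proof.
  intros H Hm. induction l as [|a l IH].
  - exists []. intros a [].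
  - destruct (H a (or_introl eq_refl)) as [m Qm].
    destruct IH as [M HM]. { intros; apply H; right; auto. }
    exists (m ++ M). intros a' [<-|Ha'].
    + eapply Hm; [|exact Qm]. intros x ?; apply in_or_app; auto.
    + eapply Hm; [|exact (HM a' Ha')]. intros x ?; apply in_or_app; auto.
Qed.

Fixpoint subs {A} (l : list A) : list (list A) :=
  match l with
  | [] => [[]]
  | a :: l' => subs l' ++ map (cons a) (subs l')
  end.

Lemma subs_spec {A} (l : list A) (P : A -> Prop) :
  exists s, In s (subs l) /\ forall v, In v s <-> (In v l /\ P v).
Proof.
  induction l as [|a l [s [Hs Hv]]].
  - exists []. simpl. split; auto. intros v; split; [intros []|intros [[] _]].
  - destruct (classic (P a)).
    + exists (a :: s). split.
      * simpl. apply in_or_app. right. apply in_map. auto.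
      * intros v. simpl. rewrite Hv. split.
        -- intros [<-|[? ?]]; auto.
        -- intros [[<-|?] ?]; auto.
    + exists s. split.
      * simpl. apply in_or_app; auto.
      * intros v. rewrite Hv. simpl. split.
        -- intros [? ?]; auto.
        -- intros [[<-|?] ?]; [contradiction|auto].
Qed.

Lemma grp_facts {G} (mul : G -> G -> G) one inv : is_group mul one inv ->
  (forall a b, mul (inv a) (mul a b) = b) /\
  (forall a b, mul a (mul (inv a) b) = b) /\
  (forall a b, mul (mul b a) (inv a) = b) /\
  (forall a b, mul (mul b (inv a)) a = b).
Proof.
  intros [As [Id Iv]]. repeat split; intros a b.
  - rewrite As, (proj1 (Iv a)). apply Id.
  - rewrite As, (proj2 (Iv a)). apply Id.
  - rewrite <- As, (proj2 (Iv a)). apply Id.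
  - rewrite <- As, (proj1 (Iv a)). apply Id.
Qed.

Lemma cent_inv {G} (mul : G -> G -> G) one inv h c : is_group mul one inv ->
  centralizer mul h c -> centralizer mul h (inv c).
Proof.
  intros HG Hc. pose proof (grp_facts _ _ _ HG) as [F1 [F2 [F3 F4]]].
  destruct HG as [As _]. unfold centralizer in *.
  transitivity (mul (mul (mul (inv c) h) c) (inv c)); [symmetry; apply F3|].
  rewrite <- (As (inv c) h c), <- Hc, F1. reflexivity.
Qed.

Lemma cent_conj {G} (mul : G -> G -> G) one inv h g gi : is_group mul one inv ->
  mul (inv gi) (mul h gi) = mul (inv g) (mul h g) ->
  centralizer mul h (mul g (inv gi)).
Proof.
  intros HG E. pose proof (grp_facts _ _ _ HG) as [F1 [F2 [F3 F4]]].
  destruct HG as [As _]. unfold centralizer.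
  apply (f_equal (mul g)) in E. rewrite F2 in E.
  apply (f_equal (fun z => mul z (inv gi))) in E.
  assert (L: mul (mul g (mul (inv gi) (mul h gi))) (inv gi) = mul (mul g (inv gi)) h).
  { rewrite (As (inv gi) h gi), (As g (mul (inv gi) h) gi), F3, As. reflexivity. }
  rewrite <- L, E, As. reflexivity.
Qed.

Lemma walk_act {G V} (mul : G -> G -> G) one adj (act : G -> V -> V) g n a b :
  is_simplicial_action mul one adj act -> walk adj n a b -> walk adj n (act g a) (act g b).
Proof.
  intros [_ [_ Ha]] W. induction W.
  - constructor.
  - econstructor; [apply Ha; eauto|eauto].
Qed.

Lemma dist_act {G V} (mul : G -> G -> G) one adj (act : G -> V -> V) g a b K :
  is_simplicial_action mul one adj act -> dist_le adj a b K -> dist_le adj (act g a) (act g b) K.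
Proof.
  intros HA [n [? W]]. exists n. split; auto. eapply walk_act; eauto.
Qed.

Theorem theorem4p3 (G V : Type) (mul : G -> G -> G) (one : G) (inv : G -> G)
    (adj : V -> V -> Prop) (act : G -> V -> V) :
  is_group mul one inv ->
  systolic adj ->
  is_simplicial_action mul one adj act ->
  acts_geometrically adj act (fun _ => True) (fun _ => True) ->
  forall h : G, hyperbolic adj act h ->
  forall L K : nat, translation_length adj act h L -> L <= K ->
  (forall g, centralizer mul h g ->
     forall x, Disp adj act K h x -> Disp adj act K h (act g x)) /\
  acts_geometrically adj act (centralizer mul h) (Disp adj act K h).
Proof.
  intros HG Hsys HA [Hstab [S0 [HS0 HS0cov]]] h _ L K _ _.
  pose proof (grp_facts _ _ _ HG) as [F1 [F2 [F3 F4]]].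
  pose proof HA as [A1 [A2 A3]].
  destruct Hsys as [[Hsym Hirr] _].
  assert (actK : forall g x, act (inv g) (act g x) = x).
  { intros g x. rewrite <- A2, (proj1 (proj2 (proj2 HG) g)). apply A1. }
  assert (actK' : forall g x, act g (act (inv g) x) = x).
  { intros g x. rewrite <- A2, (proj2 (proj2 (proj2 HG) g)). apply A1. }
  assert (P1 : forall g, centralizer mul h g ->
     forall x, Disp adj act K h x -> Disp adj act K h (act g x)).
  { unfold Disp. intros g Hg x Hx.
    replace (act h (act g x)) with (act g (act h x)).
    - eapply dist_act; eauto.
    - rewrite <- A2, Hg, A2. reflexivity. }
  assert (Htr : forall a v, fin (fun g => act g a = v)).
  { intros a v. destruct (classic (exists g0, act g0 a = v)) as [[g0 Hg0]|n].
    - destruct (Hstab a I) as [l Hl]. exists (map (mul g0) l). intros g Hg.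
      replace g with (mul g0 (mul (inv g0) g)) by apply F2. apply in_map. apply Hl.
      split; auto. rewrite A2, Hg, <- Hg0. apply actK.
    - exists []. intros g Hg. exfalso; eauto. }
  assert (Hnb : forall v, fin (fun w => adj v w)).
  { intros v.
    apply (fin_mono _ (fun w => exists s, In s S0 /\ (exists a, In a s /\
       (exists g, act g a = v /\ (exists b, In b s /\ act g b = w))))).
    - intros w Hw.
      assert (Hsimp : is_simplex_in adj (fun _ => True) [v; w]).
      { split; [split|]; auto.
        - discriminate.
        - intros x y [<-|[<-|[]]] [<-|[<-|[]]]; auto. }
      destruct (HS0cov _ Hsimp) as [s [g [Hs [_ Him]]]].
      destruct (proj1 (Him v) (or_introl eq_refl)) as [a [Ha Hav]].
      destruct (proj1 (Him w) (or_intror (or_introl eq_refl))) as [b [Hb Hbw]].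
      exists s. split; auto. exists a. split; auto. exists g. split; auto.
      exists b; auto.
    - apply fin_list_union; intros s Hs. apply fin_list_union; intros a Ha.
      apply (fin_bind (fun g => act g a = v) (fun g w => exists b, In b s /\ act g b = w)).
      + apply Htr.
      + intros g _. apply (fin_list_union s (fun b w => act g b = w)). intros b _.
        apply (fin_mono _ _ (fun x H => eq_sym H) (fin_one (act g b))). }
  assert (Hwalk : forall n v, fin (fun z => walk adj n v z)).
  { induction n as [|n IH]; intros v.
    - apply (fin_mono _ (fun z => z = v)); [|apply fin_one].
      intros z Hz. inversion Hz; subst; reflexivity.
    - apply (fin_mono _ (fun z => exists y, adj v y /\ walk adj n y z)).
      + intros z Hz. inversion Hz; subst. eauto.
      + apply (fin_bind (adj v) (fun y z => walk adj n y z)); auto. }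
  assert (Hball : forall v, fin (fun z => dist_le adj v z K)).
  { intros v. apply (fin_mono _ (fun z => exists n, In n (seq 0 (S K)) /\ walk adj n v z)).
    - intros z [n [Hn W]]. exists n. split; auto. apply in_seq. lia.
    - apply fin_list_union. intros n _. apply Hwalk. }
  assert (Hk : forall x0, fin (fun k => dist_le adj x0 (act k x0) K)).
  { intros x0. apply (fin_mono _ (fun k => exists y, dist_le adj x0 y K /\ act k x0 = y)).
    - eauto.
    - apply (fin_bind (fun y => dist_le adj x0 y K) (fun y k => act k x0 = y)); auto. }
  assert (Hrep : forall x0, exists reps, forall g, Disp adj act K h (act g x0) ->
     exists c r, centralizer mul h c /\ In r reps /\ act c r = act g x0).
  { intros x0. destruct (Hk x0) as [l Hl].
    destruct (choose_list l (fun k g => mul (inv g) (mul h g) = k)) as [m Hm].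
    exists (map (fun g => act g x0) m). intros g Hd.
    assert (Hkin : In (mul (inv g) (mul h g)) l).
    { apply Hl. unfold Disp in Hd.
      apply (dist_act _ _ _ _ (inv g) _ _ _ HA) in Hd.
      rewrite actK in Hd. rewrite !A2. exact Hd. }
    destruct (Hm _ Hkin (ex_intro _ g eq_refl)) as [gi [Hgi E]].
    exists (mul g (inv gi)), (act gi x0). split; [eapply cent_conj; eauto|].
    split; [apply (in_map (fun g => act g x0)); auto|]. rewrite <- A2, F4. reflexivity. }
  assert (Hcov0 : forall x, exists g x0, In x0 (concat S0) /\ act g x0 = x).
  { intros x.
    assert (Hsimp : is_simplex_in adj (fun _ => True) [x]).
    { split; [split|]; auto.
      - discriminate.
      - intros a b [<-|[]] [<-|[]]; auto. }
    destruct (HS0cov _ Hsimp) as [s [g [Hs [_ Him]]]].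
    destruct (proj1 (Him x) (or_introl eq_refl)) as [a [Ha Hax]].
    exists g, a. split; auto. apply in_concat. eauto. }
  destruct (ex_list_union (concat S0) (fun x0 reps => forall g, Disp adj act K h (act g x0) ->
     exists c r, centralizer mul h c /\ In r reps /\ act c r = act g x0)) as [Reps HReps0].
  { intros; apply Hrep. }
  { intros a m m' Hi Hq g Hd. destruct (Hq g Hd) as [c [r [? [? ?]]]]. exists c, r; auto. }
  assert (HReps : forall x, Disp adj act K h x ->
     exists c r, centralizer mul h c /\ In r Reps /\ act c r = x).
  { intros x Hx. destruct (Hcov0 x) as [g [x0 [Hx0 E]]]. subst x. auto. }
  destruct (fin_list_union Reps (fun r v => v = r \/ adj r v)) as [nA HnA].
  { intros r _. destruct (Hnb r) as [l Hl]. exists (r :: l). intros v [->|Hv]; simpl; auto. }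
  destruct (fin_filter (subs nA) (is_simplex_in adj (Disp adj act K h))) as [S [HS1 HS2]].
  split; [exact P1|]. split.
  { intros x _. destruct (Hstab x I) as [l Hl]. exists l. intros g [_ Hg]. apply Hl; auto. }
  exists S. split; [exact HS1|].
  intros t [[Hne Hpw] HtD]. destruct t as [|x t0]; [contradiction|].
  destruct (HReps x (HtD x (or_introl eq_refl))) as [c [r [Hc [Hr Hcr]]]].
  set (t' := map (act (inv c)) (x :: t0)).
  destruct (subs_spec nA (fun v => In v t')) as [s [Hs Hsv]].
  assert (Ht'nA : forall v, In v t' -> In v nA).
  { intros v Hv. unfold t' in Hv. apply in_map_iff in Hv as [y [<- Hy]].
    apply HnA. exists r. split; auto.
    assert (Er : r = act (inv c) x) by (rewrite <- Hcr; symmetry; apply actK).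
    destruct (Hpw x y (or_introl eq_refl) Hy) as [<-|Ha].
    - left; auto.
    - right. rewrite Er. apply A3. exact Ha. }
  assert (Hsv' : forall v, In v s <-> In v t').
  { intros v. rewrite Hsv. split; [intros [_ H]; exact H|]. intros H; split; auto. }
  exists s, c. split; [|split; [exact Hc|]].
  - apply HS2; auto. split; [split|].
    + intros E. assert (Hin : In (act (inv c) x) s).
      { apply Hsv'. unfold t'. apply in_map. left; auto. }
      rewrite E in Hin. exact Hin.
    + intros a b Ha Hb. apply Hsv' in Ha, Hb. unfold t' in Ha, Hb.
      apply in_map_iff in Ha as [a0 [<- Ha0]]. apply in_map_iff in Hb as [b0 [<- Hb0]].
      destruct (Hpw a0 b0 Ha0 Hb0) as [<-|Hab]; [left; auto|right; apply A3; exact Hab].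
    + intros v Hv. apply Hsv' in Hv. unfold t' in Hv.
      apply in_map_iff in Hv as [y [<- Hy]]. apply P1; auto.
      eapply cent_inv; eauto.
  - intros y. split.
    + intros Hy. exists (act (inv c) y). split; [|apply actK'].
      apply Hsv'. unfold t'. apply in_map; auto.
    + intros [z [Hz <-]]. apply Hsv' in Hz. unfold t' in Hz.
      apply in_map_iff in Hz as [y0 [<- Hy0]]. rewrite actK'. exact Hy0.
Qed.
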